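(* For any integer $n\ge1$ and real $0<p<1$, $$\sum_{t=0}^{n+1}|B_{n,p}(t-1)-B_{n,p}(t)|\le\frac{1}{\sqrt n}\cdot\frac{4}{\sqrt{p(1-p)}}.$$
   Context: $B_{n,p}(t)=\binom nt p^t(1-p)^{n-t}$ for $t\in[0:n]$ and $B_{n,p}(t)=0$ for $t\notin[0:n]$. *)

(* Defs.v *)
From mathcomp Require Import all_boot all_order all_algebra.
Set Implicit Arguments. Unset Strict Implicit. Unset Printing Implicit Defensive.
Import Order.TTheory GRing.Theory Num.Theory.
Local Open Scope ring_scope.

Definition binom_pmf (R : ringType) (n : nat) (p : R) (t : int) : R :=
  match t with
  | Posz k => if (k <= n)%N then ('C(n, k))%:R * p ^+ k * (1 - p) ^+ (n - k) else 0
  | Negz _ => 0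
  end.

(* Main.v *)
Require Import Defs.
From mathcomp Require Import all_boot all_order all_algebra.
From mathcomp Require Import reals.
From mathcomp Require Import ring lra zify.
Import Order.TTheory GRing.Theory Num.Theory.
Local Open Scope ring_scope.

Section Aux.
Variable R : realType.
Variable p : R.

Definition ww (N t : nat) : R := ('C(N, t))%:R * p ^+ t * (1 - p) ^+ (N - t).

Lemma ww_sum N : \sum_(0 <= t < N.+1) ww N t = 1.
Proof.
have H := exprDn (1 - p) p N.
rewrite subrK expr1n in H; rewrite H.
rewrite big_mkord; apply: eq_bigr => i _.
by rewrite /ww -mulr_natl; ring.
Qed.

Lemma ww_shift N (f : nat -> R) :
  \sum_(0 <= t < N.+2) t%:R * f t * ww N.+1 t
  = N.+1%:R * p * \sum_(0 <= s < N.+1) f s.+1 * ww N s.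
Proof.
rewrite big_nat_recl // !mul0r add0r mulr_sumr.
apply: eq_bigr => s _.
rewrite /ww subSS exprS.
have H : (s.+1)%:R * ('C(N.+1, s.+1))%:R = N.+1%:R * ('C(N, s))%:R :> R.
  by rewrite -!natrM -mul_bin_diag.
transitivity (f s.+1 * ((s.+1)%:R * ('C(N.+1, s.+1))%:R) * p * p ^+ s * (1 - p) ^+ (N - s)).
  by ring.
rewrite H; ring.
Qed.

Lemma ww_ge0 N t : 0 <= p -> p <= 1 -> 0 <= ww N t.
Proof.
move=> p0 p1; rewrite /ww; apply: mulr_ge0; [apply: mulr_ge0|].
- exact: ler0n.
- exact: exprn_ge0.
- by apply: exprn_ge0; rewrite subr_ge0.
Qed.

Lemma diff_id n t : 0 < p -> p < 1 -> (t < n.+2)%N ->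
  binom_pmf n p (t%:Z - 1) - binom_pmf n p t%:Z
  = ww n.+1 t * (t%:R - n.+1%:R * p) / (n.+1%:R * p * (1 - p)).
Proof.
move=> p0 p1 ht.
have pn : p != 0 by rewrite gt_eqF.
have qn : 1 - p != 0 by rewrite gt_eqF // subr_gt0.
have Nn : n.+1%:R != 0 :> R by rewrite pnatr_eq0.
case: t ht => [|k] hk.
  have -> : (0%:Z - 1) = Negz 0 by [].
  rewrite /= /ww bin0 subn0 !expr0 bin0 subn0 sub0r.
  rewrite -natr1 exprS. field.
  by rewrite qn pn addrC natr1.
have -> : (k.+1%:Z - 1) = k%:Z by rewrite -addn1 PoszD addrK.
rewrite /= (_ : (k <= n)%N) ?(ltnSE hk) //.
case: (ltnP k n) => hkn.
  have [d ->] : exists d, n = (k + d.+1)%N by exists (n - k.+1)%N; lia.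
  rewrite /ww.
  have e1 : ((k + d.+1) - k = d.+1)%N by lia.
  have e2 : ((k + d.+1) - k.+1 = d)%N by lia.
  have e3 : ((k + d.+1).+1 - k.+1 = d.+1)%N by lia.
  rewrite e1 e2 e3 binS.
  have H := mul_bin_left (k + d.+1) k.
  rewrite e1 in H.
  have Hb : ('C(k + d.+1, k.+1))%:R = (d.+1)%:R * ('C(k + d.+1, k))%:R / (k.+1)%:R :> R.
    apply: (@mulfI _ (k.+1)%:R); first by rewrite pnatr_eq0.
    have H' : (k.+1)%:R * ('C(k + d.+1, k.+1))%:R = (d.+1)%:R * ('C(k + d.+1, k))%:R :> R.
      by rewrite -!natrM H.
    rewrite H'; field. by rewrite addrC natr1 pnatr_eq0.
  rewrite natrD Hb !exprS.
  rewrite -!natr1 !natrD -!natr1.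
  field.
  by rewrite qn pn !natr1 -natrD natr1 !pnatr_eq0.
have -> : k = n by lia.
rewrite /ww subnn subSS subnn !expr0 !binn !mulr1.
rewrite exprS -natr1; field.
by rewrite qn pn addrC natr1.
Qed.

End Aux.

Arguments ww {R} p N t.
Arguments ww_sum {R} p N.
Arguments ww_shift {R} p N f.
Arguments ww_ge0 {R} p N t _ _.
Arguments diff_id {R} p n t _ _ _.

Theorem lemma7 (R : realType) (n : nat) (p : R) :
  (1 <= n)%N -> 0 < p -> p < 1 ->
  \sum_(0 <= t < n.+2)
     `|binom_pmf n p (t%:Z - 1) - binom_pmf n p t%:Z|
  <= 1 / Num.sqrt (n%:R) * (4 / Num.sqrt (p * (1 - p))).
Proof.
move=> n1 p0 p1.
have q0 : 0 < 1 - p by rewrite subr_gt0.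
set D := n.+1%:R * p * (1 - p).
have D0 : 0 < D by rewrite /D !mulr_gt0 // ltr0Sn.
set c := Num.sqrt D.
have c0 : 0 < c by rewrite sqrtr_gt0.
have cc : c ^+ 2 = D by rewrite sqr_sqrtr // ltW.
set x := fun t : nat => t%:R - n.+1%:R * p.
have E : \sum_(0 <= t < n.+2) `|binom_pmf n p (t%:Z - 1) - binom_pmf n p t%:Z|
   = (\sum_(0 <= t < n.+2) ww p n.+1 t * `|x t|) / D.
  rewrite mulr_suml; apply: eq_big_nat => t /andP[_ ht].
  rewrite (diff_id p n t p0 p1 ht) normrM (normrM _ (x t)) (ger0_norm (ww_ge0 p n.+1 t (ltW p0) (ltW p1))).
  by rewrite (ger0_norm (x := D^-1)) // invr_ge0 ltW.
have M0 := ww_sum p n.+1.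
have M1 : \sum_(0 <= t < n.+2) t%:R * ww p n.+1 t = n.+1%:R * p.
  have := ww_shift p n (fun _ => 1).
  rewrite (eq_bigr _ (fun i _ => mul1r (ww p n i))) ww_sum mulr1.
  by move=> <-; apply: eq_bigr => i _; rewrite mulr1.
have M2 : \sum_(0 <= t < n.+2) t%:R * t%:R * ww p n.+1 t
          = n.+1%:R * p * (n%:R * p + 1).
  rewrite ww_shift; congr (_ * _).
  case: n n1 {D D0 c c0 cc x E M0 M1} => [//|m] _.
  have := ww_shift p m (fun _ => 1).
  rewrite (eq_bigr _ (fun i _ => mul1r (ww p m i))) ww_sum mulr1 => H.
  rewrite (eq_bigr (fun s => s%:R * 1 * ww p m.+1 s + ww p m.+1 s)).
    by rewrite big_split /= H ww_sum.
  by move=> i _; rewrite -natr1; ring.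
have V : \sum_(0 <= t < n.+2) ww p n.+1 t * (x t ^+ 2 + D) = D + D.
  rewrite (eq_bigr (fun t => t%:R * t%:R * ww p n.+1 t
      + ((-(2%:R * n.+1%:R * p)) * (t%:R * ww p n.+1 t)
      + ((n.+1%:R * p) ^+ 2 + D) * ww p n.+1 t))).
    rewrite !big_split /= -!mulr_sumr M0 M1 M2 /D -natr1; ring.
  by move=> t _; rewrite /x; ring.
have B : \sum_(0 <= t < n.+2) ww p n.+1 t * `|x t| <= c.
  apply: le_trans (_ : \sum_(0 <= t < n.+2) ww p n.+1 t * (x t ^+ 2 + D) / (2%:R * c) <= c).
    apply: ler_sum_nat => t _.
    rewrite -mulrA; apply: ler_wpM2l; first exact: (ww_ge0 p n.+1 t (ltW p0) (ltW p1)).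
    rewrite ler_pdivlMr ?mulr_gt0 // -cc.
    have := sqr_ge0 (`|x t| - c).
    rewrite -[x t ^+ 2]real_normK ?num_real //.
    move=> h; nra.
  rewrite -mulr_suml V.
  rewrite ler_pdivrMr ?mulr_gt0 // -cc; nra.
rewrite E.
set a := Num.sqrt n%:R.
set b := Num.sqrt (p * (1 - p)).
have a0 : 0 < a by rewrite sqrtr_gt0 ltr0n.
have b0 : 0 < b by rewrite sqrtr_gt0 mulr_gt0.
have abc : a * b <= c.
  rewrite /a /b -sqrtrM ?ler0n // ler_sqrt; last exact: ltW.
  rewrite /D -mulrA ler_wpM2r ?ler_nat //.
  by rewrite mulr_ge0 // ltW.
have ab0 : 0 < a * b by rewrite mulr_gt0.
have h1 : (\sum_(0 <= t < n.+2) ww p n.+1 t * `|x t|) / D <= 1 / c.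
  rewrite -cc ler_pdivrMr ?exprn_gt0 //.
  have -> : 1 / c * c ^+ 2 = c by field; rewrite gt_eqF.
  exact: B.
have h2 : 1 / c <= 1 / (a * b).
  rewrite !mul1r ler_pV2 // inE ?unitfE ?gt_eqF //= ?c0 ?ab0.
have -> : 1 / a * (4 / b) = 4 * (1 / (a * b)) by field; rewrite !gt_eqF.
have : 0 <= 1 / (a * b) by rewrite mul1r invr_ge0 ltW.
lra.
Qed.
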